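(* Let $\mathfrak g$ be a finite-dimensional Lie algebra over a field $\mathbb K$ of characteristic zero, $\mathfrak h\subset\mathfrak g$ an ideal, and $f$ a polynomial function on $\mathfrak g^*$ such that $f(x+l)=f(x)$ for all $x\in\mathfrak g^*$ and all $l\in\mathrm{St}(\pi(x))^\perp$. Then $f\in\operatorname{Ann}(\mathfrak h)$.
   Context: $\pi:\mathfrak g^*\to\mathfrak h^*$ is restriction. For $h\in\mathfrak h^*$, $\mathrm{St}(h)=\{\xi\in\mathfrak g\mid\langle h,[\xi,\eta]\rangle=0\ \forall\eta\in\mathfrak h\}$, and $\mathrm{St}(h)^\perp=\{l\in\mathfrak g^*\mid\langle l,\xi\rangle=0\ \forall\xi\in\mathrm{St}(h)\}$. $S(\mathfrak g)$ is the polynomial algebra on $\mathfrak g^*$ with Lie–Poisson bracket $\{f,g\}(x)=\langle x,[df(x),dg(x)]\rangle$, and $\operatorname{Ann}(\mathfrak h)=\{f\in S(\mathfrak g)\mid\{f,\eta\}=0\ \forall\eta\in\mathfrak h\}$. *)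

(* Defs.v *)
From HB Require Import structures.
From mathcomp Require Import all_boot all_order all_algebra.
From mathcomp Require Import mpoly.
Set Implicit Arguments. Unset Strict Implicit. Unset Printing Implicit Defensive.
Import GRing.Theory.
Local Open Scope ring_scope.

(* The finite-dimensional Lie algebra g over K is K^n with a
   fixed basis e_0..e_{n-1}; its bracket is given by structure constants
   c : [e_i, e_j] = \sum_k c i j k e_k.  Elements of g are row vectors
   'rV[K]_n (coordinates in the basis e); elements of g^* are row vectors
   'rV[K]_n (coordinates in the dual basis).  Polynomial functions on g^* = S(g) are {mpoly K[n]}
   where 'X_i is the coordinate function x |-> <x, e_i> = e_i in S(g). *)

Section Lie.
Variables (K : fieldType) (n : nat).

Definition is_lie_structure (c : 'I_n -> 'I_n -> 'I_n -> K) : Prop :=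
  (forall i j k, c i j k = - c j i k) /\
  (forall i j l m,
     \sum_k (c i j k * c k l m + c j l k * c k i m + c l i k * c k j m) = 0).

Definition lie_bracket (c : 'I_n -> 'I_n -> 'I_n -> K) (xi eta : 'rV[K]_n)
  : 'rV[K]_n :=
  \row_k \sum_i \sum_j xi 0 i * eta 0 j * c i j k.

Definition pairing (x xi : 'rV[K]_n) : K := \sum_i x 0 i * xi 0 i.

Definition is_ideal (c : 'I_n -> 'I_n -> 'I_n -> K) m (H : 'M[K]_(m, n)) : Prop :=
  forall xi eta : 'rV[K]_n, (eta <= H)%MS -> (lie_bracket c xi eta <= H)%MS.

(* pi : g^* -> h^*, restriction to h.  An element of h^* is represented by a
   function on 'rV_n that is only ever evaluated on elements of h. *)
Definition restr (x : 'rV[K]_n) : 'rV[K]_n -> K := fun eta => pairing x eta.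

(* St(h) = { xi in g | <h, [xi, eta]> = 0 for all eta in h }, for h in h^*
   (note [xi, eta] lies in h since h is an ideal). *)
Definition St (c : 'I_n -> 'I_n -> 'I_n -> K) m (H : 'M[K]_(m, n))
  (hh : 'rV[K]_n -> K) (xi : 'rV[K]_n) : Prop :=
  forall eta : 'rV[K]_n, (eta <= H)%MS -> hh (lie_bracket c xi eta) = 0.

Definition St_perp (c : 'I_n -> 'I_n -> 'I_n -> K) m (H : 'M[K]_(m, n))
  (hh : 'rV[K]_n -> K) (l : 'rV[K]_n) : Prop :=
  forall xi : 'rV[K]_n, St c H hh xi -> pairing l xi = 0.

Definition peval (f : {mpoly K[n]}) (x : 'rV[K]_n) : K := f.@[fun i => x 0 i].

Definition lin (eta : 'rV[K]_n) : {mpoly K[n]} := \sum_i eta 0 i *: 'X_i.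

(* Lie-Poisson bracket {f,g}(x) = <x, [df(x), dg(x)]> in S(g) *)
Definition poisson (c : 'I_n -> 'I_n -> 'I_n -> K) (f g : {mpoly K[n]})
  : {mpoly K[n]} :=
  \sum_i \sum_j \sum_k
     (c i j k *: ('X_k * (mderiv i f) * (mderiv j g))).

Definition Ann (c : 'I_n -> 'I_n -> 'I_n -> K) m (H : 'M[K]_(m, n))
  (f : {mpoly K[n]}) : Prop :=
  forall eta : 'rV[K]_n, (eta <= H)%MS -> poisson c f (lin eta) = 0.

End Lie.

(* Main.v *)
Require Import Defs.
From HB Require Import structures.
From mathcomp Require Import all_boot all_order all_algebra.
From mathcomp Require Import mpoly.
From mathcomp Require Import ring.
Set Implicit Arguments. Unset Strict Implicit. Unset Printing Implicit Defensive.
Import GRing.Theory.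
Local Open Scope ring_scope.

Section Aux.
Variables (K : fieldType) (n : nat).

Definition mm (v : 'I_n -> {poly K}) (g : {mpoly K[n]}) : {poly K} :=
  mmap (@polyC K) v g.

Lemma mmD v : {morph mm v : x y / x + y}.
Proof. by move=> x y; rewrite /mm mmapD. Qed.
Lemma mmM v : {morph mm v : x y / x * y}.
Proof. by move=> x y; rewrite /mm rmorphM. Qed.
Lemma mmC v c : mm v c%:MP = c%:P.
Proof. by rewrite /mm mmapC. Qed.
Lemma mmX v i : mm v 'X_i = v i.
Proof. by rewrite /mm mmapX mmap1U. Qed.

Definition CR v g := (mm v g)^`() = \sum_i mm v (g^`M(i)) * (v i)^`().

Lemma CRD v g h : CR v g -> CR v h -> CR v (g + h).
Proof.
rewrite /CR mmD derivD => -> ->; rewrite -big_split /=; apply: eq_bigr => i _.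
by rewrite mderivD mmD mulrDl.
Qed.

Lemma CRM v g h : CR v g -> CR v h -> CR v (g * h).
Proof.
rewrite /CR mmM derivM => -> ->; rewrite mulr_suml mulr_sumr -big_split /=.
apply: eq_bigr => i _.
rewrite mderivM mmD !mmM mulrDl; congr (_ + _); ring.
Qed.

Lemma CRC v c : CR v c%:MP.
Proof.
rewrite /CR mmC derivC big1 // => i _; by rewrite mderivC mmC mul0r.
Qed.

Lemma CRX v j : CR v 'X_j.
Proof.
rewrite /CR mmX (bigD1 j) //= big1 ?addr0.
  have E : (U_(j) - U_(j) = 0 :> 'X_{1..n})%MM.
    by apply/mnmP=> k; rewrite mnmBE mnm0E subnn.
  by rewrite mderivX mnm1E eqxx E mpolyX0 scale1r mmC mul1r.
move=> i ij; rewrite mderivX mnm1E eq_sym (negbTE ij) scale0r /mm mmap0 mul0r //.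
Qed.

Lemma CRall v g : CR v g.
Proof.
elim/mpolyind: g => [|c m p _ _ IH].
  by have := CRC v 0; rewrite mpolyC0.
apply: CRD => //; rewrite -mul_mpolyC; apply: CRM; first exact: CRC.
rewrite mpolyXE_id; elim/big_ind: _ => //.
- by have := CRC v 1; rewrite mpolyC1.
- by move=> ???; apply: CRM.
- move=> i _; elim: (m i) => [|k IHk]; first by have := CRC v 1; rewrite mpolyC1 expr0.
  by rewrite exprS; apply: CRM => //; apply: CRX.
Qed.

Lemma mm_horner v g t : (mm v g).[t] = g.@[fun i => (v i).[t]].
Proof.
rewrite -horner_evalE /mm /mmap rmorph_sum mevalE; apply: eq_bigr => m _.
rewrite rmorphM /= rmorph_prod /= horner_evalE hornerC /mmap1; congr (_ * _).
by apply: eq_bigr => i _; rewrite rmorphXn /= horner_evalE.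
Qed.

Lemma const_deriv (q : {poly K}) : [pchar K] =i pred0 ->
  (forall t, q.[t] = q.[0]) -> q^`() = 0.
Proof.
move=> ch hq.
suff -> : q = (q.[0])%:P by rewrite derivC.
apply/eqP; rewrite -subr_eq0; apply/eqP.
apply: (@roots_geq_poly_eq0 _ _ [seq i%:R | i <- iota 0 (size (q - (q.[0])%:P))]).
- by apply/allP => t _; rewrite /root hornerD hornerN hornerC hq subrr.
- rewrite map_inj_uniq ?iota_uniq // => a b E.
  have key : forall a b, (a <= b)%N -> a%:R = b%:R :> K -> a = b.
    move=> x y le; rewrite -(subnK le) natrD -{1}[x%:R]add0r => /addIr /esym /eqP.
    by rewrite ((pcharf0P K).1 ch) subn_eq0 => le2; rewrite subnK //; apply/eqP; rewrite eqn_leq le2 le.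
  case: (leqP a b) => [le|/ltnW le]; first exact: key.
  by apply/esym/key.
- by rewrite size_map size_iota.
Qed.

Lemma line_deriv (ch : [pchar K] =i pred0) (g : {mpoly K[n]}) (x l : 'I_n -> K) :
  (forall t, g.@[fun i => x i + t * l i] = g.@[x]) ->
  \sum_i (g^`M(i)).@[x] * l i = 0.
Proof.
move=> hg.
pose v i := (x i)%:P + l i *: 'X.
have hv t : (fun i => (v i).[t]) =1 (fun i => x i + t * l i).
  by move=> i; rewrite /v hornerD hornerC hornerZ hornerX mulrC.
have hq : forall t, (mm v g).[t] = (mm v g).[0].
  by move=> t; rewrite !mm_horner !(meval_eq _ (hv _)) hg -(hg 0); apply: meval_eq => i; rewrite mul0r addr0.
have := const_deriv ch hq; rewrite CRall => /(congr1 (fun p => p.[0])).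
rewrite horner0 horner_sum => E; rewrite -[RHS]E; apply: eq_bigr => i _.
rewrite hornerM mm_horner (meval_eq _ (hv 0)) /v derivD derivC derivZ derivX add0r hornerZ hornerC mulr1.
by congr (_ * _); apply: meval_eq => j; rewrite mul0r addr0.
Qed.

Lemma mderivXU (i j : 'I_n) : ('X_i : {mpoly K[n]})^`M(j) = ((i == j)%:R)%:MP.
Proof.
rewrite mderivX mnm1E; case: eqVneq => [->|_]; last by rewrite scale0r mpolyC0.
have E : (U_(j) - U_(j) = 0 :> 'X_{1..n})%MM.
  by apply/mnmP=> k; rewrite mnmBE mnm0E subnn.
by rewrite E mpolyX0 scale1r mpolyC1.
Qed.

Lemma meval_zero (h : {mpoly K[n]}) : h.@[fun _ => 0] = h@_0.
Proof.
elim/mpolyind: h => [|c m p _ _ IH]; first by rewrite meval0 mcoeff0.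
rewrite mevalD mevalZ mevalX mcoeffD mcoeffZ mcoeffX IH; congr (_ * _ + _).
case: eqVneq => [->|].
  by rewrite big1 // => i _; rewrite mnm0E expr0.
move=> nm; have [i hi] : exists i, m i != 0%N.
  apply/existsP; apply: contraR nm; rewrite negb_exists => /forallP H.
  by apply/eqP/mnmP => i; rewrite mnm0E; apply/eqP; have := H i; rewrite negbK.
by rewrite (bigD1 i) //= expr0n (negbTE hi) mul0r.
Qed.

Lemma zero_poly (ch : [pchar K] =i pred0) (g : {mpoly K[n]}) :
  (forall x, g.@[x] = 0) -> g = 0.
Proof.
move=> Z.
have Zd : forall (h : {mpoly K[n]}) (i : 'I_n), (forall x, h.@[x] = 0) -> forall x, (h^`M(i)).@[x] = 0.
  move=> h i Zh x.
  have := @line_deriv ch h x (fun j => (i == j)%:R).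
  rewrite (bigD1 i) //= eqxx mulr1 big1 ?addr0; first by apply => t; rewrite !Zh.
  by move=> j ji; rewrite eq_sym (negbTE ji) mulr0.
have Zm : forall m x, (g^`M[m]).@[x] = 0.
  move=> m; rewrite mderivm_foldr; elim: (flatten _) => //= i s IH.
  exact: Zd.
apply/mpolyP => m; rewrite mcoeff0.
have := Zm m (fun _ => 0); rewrite meval_zero mcoeff_mderivm addm0 => /eqP.
rewrite -mulr_natr mulf_eq0 ((pcharf0P K).1 ch) => /orP [/eqP //|].
move=> /eqP H; exfalso; move: H; apply/eqP; rewrite -lt0n; apply: prodn_gt0 => i.
by rewrite ffactnn fact_gt0.
Qed.

Lemma lin_deriv (eta : 'rV[K]_n) j : (lin eta)^`M(j) = (eta 0 j)%:MP.
Proof.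
rewrite /lin (big_morph _ (mderivD j) (mderiv0 _ j)) (bigD1 j) //= mderivZ mderivXU eqxx.
rewrite mpolyC1 big1 ?addr0 -?mul_mpolyC ?mulr1 // => i ij.
by rewrite mderivZ mderivXU (negbTE ij) mpolyC0 scaler0.
Qed.
End Aux.

Unset Implicit Arguments.
Theorem corollary2 (K : fieldType) (n : nat)
  (c : 'I_n -> 'I_n -> 'I_n -> K) (m : nat) (H : 'M[K]_(m, n))
  (f : {mpoly K[n]}) :
  [pchar K] =i pred0 ->
  is_lie_structure c ->
  is_ideal c H ->
  (forall x l : 'rV[K]_n, St_perp c H (restr x) l ->
     peval f (x + l) = peval f x) ->
  Ann c H f.
Proof.
move=> ch _ _ hf eta heta.
apply: (zero_poly ch) => y.
pose l i := \sum_j \sum_k y k * c i j k * eta 0 j.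
pose X := \row_i y i.
pose L := \row_i l i.
have hyp : forall t, f.@[fun i => y i + t * l i] = f.@[y].
  move=> t.
  have hp : St_perp c H (restr X) (t *: L).
    move=> xi hxi; have := hxi eta heta; rewrite /restr /pairing => E.
    rewrite /pairing; transitivity (t * \sum_k X 0 k * lie_bracket c xi eta 0 k); last by rewrite E mulr0.
    rewrite mulr_sumr.
    transitivity (\sum_k \sum_i \sum_j t * (y k * (xi 0 i * eta 0 j * c i j k))); last first.
      apply: eq_bigr => k _; rewrite !mxE mulr_sumr mulr_sumr; apply: eq_bigr => i _.
      by rewrite mulr_sumr mulr_sumr.
    rewrite exchange_big; apply: eq_bigr => i _; rewrite exchange_big /=.
    rewrite !mxE /l mulr_sumr mulr_suml; apply: eq_bigr => j _.
    rewrite mulr_sumr mulr_suml; apply: eq_bigr => k _; ring.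
  have := hf X (t *: L) hp; rewrite /peval => E.
  transitivity (f.@[fun i => (X + t *: L) 0 i]).
    by apply: meval_eq => i; rewrite !mxE.
  by rewrite E; apply: meval_eq => i; rewrite mxE.
have key := line_deriv ch hyp.
rewrite /poisson (big_morph _ (mevalD y) (meval0 y)) -[RHS]key; apply: eq_bigr => i _.
rewrite (big_morph _ (mevalD y) (meval0 y)) /l mulr_sumr; apply: eq_bigr => j _.
rewrite (big_morph _ (mevalD y) (meval0 y)) mulr_sumr; apply: eq_bigr => k _.
rewrite mevalZ !mevalM mevalXU lin_deriv mevalC; ring.
Qed.
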